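(* Let $p_n(\mathbf y)$ be a linear sequence of symmetric functions of binomial type, and let $\mathbf y=(y_1,y_2,\dots)$ and $\mathbf z=(z_1,z_2,\dots)$ be disjoint sets of variables. Then for every $n\ge0$, $$p_n(\mathbf y\cup\mathbf z)=\sum_{k=0}^n\binom nk\,p_{n-k}(\mathbf y)\,p_k(\mathbf z).$$
   Context: A linear sequence of symmetric functions of binomial type is $$p_n(\mathbf y)=\sum_{\lambda\vdash n}\frac{n!}{\prod_i\lambda_i!}\Big(\prod_ia_{\lambda_i}\Big)m_\lambda(\mathbf y)$$ for a sequence $(a_i)_{i\ge0}$ of complex numbers with $a_0=1$, $a_1\ne0$, where $m_\lambda$ is the monomial symmetric function. $p_n(\mathbf y\cup\mathbf z)$ denotes the symmetric function $p_n$ evaluated on the combined set of variables $\mathbf y\cup\mathbf z$. *)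

(* Defs.v *)
From HB Require Import structures.
From mathcomp Require Import all_boot all_algebra.
From mathcomp Require Import complex.
From mathcomp Require Import mpoly.
Set Implicit Arguments. Unset Strict Implicit. Unset Printing Implicit Defensive.
Import GRing.Theory.
Local Open Scope ring_scope.

(* Partitions of n with all parts <= mx, as nonincreasing lists of positive
   integers; [fuel] is structural fuel (fuel = n suffices). *)
Fixpoint parts_rec (fuel n mx : nat) : seq (seq nat) :=
  if n is 0 then [:: [::]] else
  if fuel is f.+1 then
    flatten [seq [seq i :: l | l <- parts_rec f (n - i) i] | i <- iota 1 (minn n mx)]
  else [::].

Definition partitions (n : nat) : seq (seq nat) := parts_rec n n n.

(* Monomial symmetric function m_lambda evaluated at the finite variable
   family x_0,...,x_{N-1} (elements of a commutative ring T): the sum of all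
   distinct monomials prod_i x_i^(al_i) whose nonzero exponents are a
   rearrangement of lambda. *)
Definition msym (T : comNzRingType) (N : nat) (x : 'I_N -> T) (la : seq nat) : T :=
  \sum_(al : {ffun 'I_N -> 'I_(sumn la).+1} |
          perm_eq [seq (al i : nat) | i <- enum 'I_N & (al i : nat) != 0%N] la)
     \prod_(i < N) x i ^+ al i.

Definition pbin (C : fieldType) (T : comAlgType C) (a : nat -> C) (n : nat)
    (N : nat) (x : 'I_N -> T) : T :=
  \sum_(la <- partitions n)
     ((n`!)%:R / (\prod_(j <- la) (j`!)%:R) * \prod_(j <- la) a j) *: msym x la.

(* Main.v *)
Require Import Defs.
From HB Require Import structures.
From mathcomp Require Import all_boot all_algebra.
From mathcomp Require Import complex.
From mathcomp Require Import mpoly.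
From mathcomp Require Import zify ring.
Set Implicit Arguments. Unset Strict Implicit. Unset Printing Implicit Defensive.
Import GRing.Theory.
Local Open Scope ring_scope.

Lemma parts_sound fuel n mx la : la \in parts_rec fuel n mx ->
  [/\ sumn la = n, path geq mx la & all (fun k => 0 < k)%N la].
Proof.
elim: fuel n mx la => [|f IH] [|n] mx la /=.
- by rewrite inE => /eqP ->.
- by [].
- by rewrite inE => /eqP ->.
case/flatten_mapP => i; rewrite mem_iota => /andP [i1 i2] /mapP [l hl ->].
have [s1 p1 a1] := IH _ _ _ hl.
have hin : (i <= n.+1)%N by move: i2; rewrite add1n ltnS leq_min => /andP[].
have him : (i <= mx)%N by move: i2; rewrite add1n ltnS leq_min => /andP[].
split => /=; first by rewrite s1 subnKC.
- by rewrite him p1.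
- by rewrite i1 a1.
Qed.

Lemma parts_complete fuel n mx la : (n <= fuel)%N -> sumn la = n ->
  path geq mx la -> all (fun k => 0 < k)%N la -> la \in parts_rec fuel n mx.
Proof.
elim: fuel n mx la => [|f IH] n mx [|i l] /=.
- by move=> _ <-; rewrite inE.
- move=> hf hs _ /andP[i0 _]; move: hf; rewrite -hs leqn0 addn_eq0.
  by case/andP => /eqP h _; rewrite h in i0.
- by move=> _ <-; rewrite inE.
move=> hf hs /andP [him hp] /andP [i0 ha].
rewrite -hs in hf *.
case E: (i + sumn l)%N => [|n']; first by move/eqP: E; rewrite addn_eq0 => /andP[/eqP h _]; rewrite h in i0.
apply/flatten_mapP; exists i.
  rewrite mem_iota i0 add1n ltnS leq_min him -E leq_addr //.
apply/mapP; exists l => //; apply: IH => //.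
- move: hf; rewrite E; lia.
- by rewrite -E addKn.
Qed.

Lemma uniq_cons_flatten (s : seq nat) (t : nat -> seq (seq nat)) :
  uniq s -> (forall x, x \in s -> uniq (t x)) ->
  uniq (flatten [seq [seq x :: y | y <- t x] | x <- s]).
Proof.
elim: s => [|x s IH] //= /andP [xs us] ht.
rewrite cat_uniq IH ?andbT; last by move=> y ys; apply: ht; rewrite inE ys orbT.
rewrite map_inj_uniq ?ht ?inE ?eqxx //=; last by move=> a b [].
apply/hasPn => z /flatten_mapP [y ys /mapP [w _ ->]].
apply/mapP => [[v _ [eyx _]]].
by move: xs; rewrite -eyx ys.
by [].
Qed.

Lemma parts_uniq fuel n mx : uniq (parts_rec fuel n mx).
Proof.
elim: fuel n mx => [|f IH] [|n] mx //=.
by apply: uniq_cons_flatten => //; apply: iota_uniq.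
Qed.


Lemma mem_sumn_le (s : seq nat) x : x \in s -> (x <= sumn s)%N.
Proof.
elim: s => [|y s IH] //=; rewrite inE => /orP [/eqP ->|/IH h]; first exact: leq_addr.
exact: (leq_trans h (leq_addl _ _)).
Qed.

Lemma geq_trans : transitive geq.
Proof. by move=> a b c /= h1 h2; apply: leq_trans h2 h1. Qed.
Lemma geq_anti : antisymmetric geq.
Proof. by move=> a b /andP [h1 h2]; apply/eqP; rewrite eqn_leq; apply/andP; split. Qed.
Lemma geq_tot : total geq.
Proof. by move=> a b; apply: leq_total. Qed.

Definition nzs N (f : 'I_N -> nat) := [seq f i | i <- enum 'I_N & f i != 0%N].

Lemma nzs_ext N (f g : 'I_N -> nat) : f =1 g -> nzs f = nzs g.
Proof. by move=> e; rewrite /nzs (eq_map e) (eq_filter (fun i => congr1 (fun k => k != 0%N) (e i))). Qed.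

Lemma sumn_nzs N (f : 'I_N -> nat) : sumn (nzs f) = (\sum_i f i)%N.
Proof.
rewrite sumnE big_map big_filter big_enum_cond /= big_mkcond /=.
by apply: eq_bigr => i _; case: eqP => [->|].
Qed.

Lemma prod_nzs (R : comPzSemiRingType) N (f : 'I_N -> nat) (g : nat -> R) :
  g 0%N = 1 -> \prod_(k <- nzs f) g k = \prod_i g (f i).
Proof.
move=> g0; rewrite big_map big_filter big_enum_cond /= big_mkcond /=.
by apply: eq_bigr => i _; case: eqP => [->|].
Qed.

Lemma nzs_le N (f : 'I_N -> nat) la : perm_eq (nzs f) la -> forall i, (f i <= sumn la)%N.
Proof.
move=> hp i; case: (eqVneq (f i) 0%N) => [->//|fi].
apply: mem_sumn_le; rewrite -(perm_mem hp).
by apply: map_f; rewrite mem_filter fi mem_enum.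
Qed.

Lemma nzs_pos N (f : 'I_N -> nat) : all (fun k => 0 < k)%N (nzs f).
Proof. by apply/allP => k; case/mapP => i; rewrite mem_filter lt0n => /andP [h _] ->. Qed.

Section Alg.
Variables (C : fieldType) (T : comAlgType C) (a : nat -> C).

Lemma widen_sum N j D (hjD : (j <= D)%N) (P : ('I_N -> nat) -> bool) (F : ('I_N -> nat) -> T)
  (extP : forall f g, f =1 g -> P f = P g) (extF : forall f g, f =1 g -> F f = F g)
  (hP : forall f, P f -> forall i, (f i <= j)%N) :
  \sum_(al : {ffun 'I_N -> 'I_D.+1} | P (fun i => al i)) F (fun i => al i) =
  \sum_(al : {ffun 'I_N -> 'I_j.+1} | P (fun i => al i)) F (fun i => al i).
Proof.
have hjD' : (j.+1 <= D.+1)%N by [].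
pose h (al : {ffun 'I_N -> 'I_j.+1}) : {ffun 'I_N -> 'I_D.+1} := [ffun i => widen_ord hjD' (al i)].
pose h' (be : {ffun 'I_N -> 'I_D.+1}) : {ffun 'I_N -> 'I_j.+1} := [ffun i => inord (be i)].
rewrite (reindex_onto h h').
  apply: eq_big => al.
    have -> : h' (h al) == al.
      by apply/eqP/ffunP => i; rewrite !ffunE; apply: val_inj; rewrite /= inordK.
    by rewrite andbT; apply: extP => i; rewrite ffunE.
  by move=> _; apply: extF => i; rewrite ffunE.
move=> be hb; apply/ffunP => i; rewrite !ffunE; apply: val_inj => /=.
by rewrite inordK // ltnS; apply: hP hb i.
Qed.

Definition monoX N (x : 'I_N -> T) (f : 'I_N -> nat) := \prod_(i < N) x i ^+ f i.
Definition wtX N (f : 'I_N -> nat) := \prod_(i < N) (a (f i) / ((f i)`!)%:R).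

Lemma msym_gen N D (x : 'I_N -> T) la : (sumn la <= D)%N ->
  Defs.msym x la = \sum_(al : {ffun 'I_N -> 'I_D.+1} | perm_eq (nzs (fun i => al i)) la)
                 monoX x (fun i => al i).
Proof.
move=> hD; rewrite (@widen_sum N (sumn la) D hD (fun f => perm_eq (nzs f) la) (monoX x)).
- by [].
- by move=> f g e; rewrite (nzs_ext e).
- by move=> f g e; apply: eq_bigr => i _; rewrite e.
- by move=> f hf; apply: nzs_le.
Qed.

End Alg.


Section Alg2.
Variables (C : fieldType) (T : comAlgType C) (a : nat -> C).

Definition Epoly D N (x : 'I_N -> T) : {poly T} :=
  \prod_(i < N) \poly_(k < D.+1) ((a k / (k`!)%:R) *: x i ^+ k).

Lemma coefEp D N (x : 'I_N -> T) j : (Epoly D x)`_j =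
  \sum_(al : {ffun 'I_N -> 'I_D.+1} | (\sum_i (al i : nat) == j)%N)
     wtX a (fun i => al i) *: monoX x (fun i => al i).
Proof.
rewrite /Epoly; under eq_bigr do rewrite poly_def.
rewrite bigA_distr_bigA /= coef_sum [RHS]big_mkcond /=; apply: eq_bigr => al _.
under eq_bigr do rewrite -mul_polyC.
rewrite big_split /= -rmorph_prod prodrXr coefCM coefXn scaler_prod.
by rewrite eq_sym; case: eqP; rewrite ?mulr1 ?mulr0.
Qed.

End Alg2.


Section Alg3.
Variables (C : fieldType) (T : comAlgType C) (a : nat -> C).
Hypothesis ha0 : a 0%N = 1.

Lemma sum_parts N (f : 'I_N -> nat) j :
  \sum_(la <- partitions j) (if perm_eq (nzs f) la then
       (j`!)%:R / (\prod_(k <- la) (k`!)%:R) * \prod_(k <- la) a k else 0)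
  = if (\sum_i f i == j)%N then (j`!)%:R * wtX a f else 0 :> C.
Proof.
case: eqP => hs; last first.
  rewrite big1_seq // => la /andP [_ hl].
  have [s1 _ _] := parts_sound hl.
  case: ifP => // hp; case: hs; by rewrite -sumn_nzs (perm_sumn hp).
set s := sort geq (nzs f).
have hps : perm_eq (nzs f) s by rewrite perm_sym perm_sort.
have sP : s \in partitions j.
  apply: parts_complete => //.
  - by rewrite -(perm_sumn hps) sumn_nzs.
  - rewrite path_min_sorted; first exact: (sort_sorted geq_tot).
    apply/allP => k ks; rewrite /= -hs -sumn_nzs (perm_sumn hps).
    exact: mem_sumn_le.
  - by rewrite -(perm_all _ hps) nzs_pos.
rewrite -big_mkcond -big_filter (@perm_big _ _ _ _ _ [:: s]); last first.
  apply: uniq_perm => //; first by rewrite filter_uniq // parts_uniq.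
  move=> la; rewrite mem_filter inE; apply/andP/eqP => [[hp hl]|->]; last by [].
  have [_ pl _] := parts_sound hl.
  apply: (sorted_eq geq_trans geq_anti) => //.
  - exact: path_sorted pl.
  - exact: (sort_sorted geq_tot).
  - by rewrite perm_sym in hp; apply: perm_trans hp hps.
rewrite big_seq1 -!(perm_big _ hps) /=.
rewrite (prod_nzs f (g := fun k => (k`!)%:R)) // (prod_nzs f (g := a)) //.
by rewrite /wtX prodf_div mulrA [_ * _ / _]mulrAC.
Qed.

End Alg3.


Section Alg4.
Variables (C : fieldType) (T : comAlgType C) (a : nat -> C).
Hypothesis ha0 : a 0%N = 1.

Lemma pbin_coef D N (x : 'I_N -> T) j : (j <= D)%N ->
  pbin a j x = ((j`!)%:R : C) *: (Epoly a D x)`_j.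
Proof.
move=> hjD; rewrite /pbin coefEp scaler_sumr.
pose c la := (j`!)%:R / (\prod_(k <- la) (k`!)%:R) * \prod_(k <- la) a k : C.
transitivity (\sum_(la <- partitions j) \sum_(al : {ffun 'I_N -> 'I_D.+1})
   (if perm_eq (nzs (fun i => al i)) la then c la else 0) *: monoX x (fun i => al i)).
  apply: eq_big_seq => la hl.
  rewrite (msym_gen x (D := D)); last by have [-> _ _] := parts_sound hl.
  rewrite scaler_sumr big_mkcond /=; apply: eq_bigr => al _.
  by case: ifP; rewrite ?scale0r.
rewrite exchange_big /= [RHS]big_mkcond /=; apply: eq_bigr => al _.
rewrite -scaler_suml sum_parts //.
by case: ifP; rewrite ?scale0r ?scalerA.
Qed.
End Alg4.

Lemma Epoly_split (C : fieldType) (T : comAlgType C) (a : nat -> C) D m l (x : 'I_(m + l) -> T) :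
  Epoly a D x = Epoly a D (fun i => x (lshift l i)) * Epoly a D (fun j => x (rshift m j)).
Proof. rewrite /Epoly big_split_ord. reflexivity. Qed.


Lemma scal3 (C : fieldType) (T : comAlgType C) (c1 c2 : C) (X Y : T) (N : nat) :
  N%:R * (c1 *: X) * (c2 *: Y) = (N%:R * c1 * c2) *: (X * Y).
Proof.
rewrite -scalerAr -scalerAr -scalerAl !scalerA -[N%:R * X * Y]mulrA.
rewrite [N%:R * (X * Y)]mulr_natl -[(X * Y) *+ N]scaler_nat scalerA.
by congr (_ *: _); rewrite mulrC [c2 * c1]mulrC mulrA.
Qed.

Lemma fin_alg (C : fieldType) (T : comAlgType C) (A B : nat -> T) n :
  \sum_(i < n.+1) ((n`!)%:R : C) *: (A (n - i)%N * B i) =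
  \sum_(k < n.+1) 'C(n, k)%:R * (((((n - k)%N)`!)%:R : C) *: A (n - k)%N) * (((k`!)%:R : C) *: B k).
Proof.
refine (eq_bigr _ _) => k _.
rewrite scal3; congr (_ *: _).
rewrite -(bin_fact (ltnSE (ltn_ord k))) !natrM.
by rewrite -mulrA [(k`!)%:R * _]mulrC.
Qed.

Lemma binom_gen (C : fieldType) (T : comAlgType C) (a : nat -> C) (ha0 : a 0%N = 1)
  m l n (x : 'I_(m + l) -> T) :
  pbin a n x = \sum_(k < n.+1) 'C(n, k)%:R * pbin a (n - k)%N (fun i => x (lshift l i))
                  * pbin a k (fun j => x (rshift m j)).
Proof.
rewrite (pbin_coef ha0 _ (leqnn n)) Epoly_split coefMr scaler_sumr.
under [RHS]eq_bigr => k _ do rewrite (pbin_coef ha0 _ (leq_subr k n)) (pbin_coef ha0 _ (ltnSE (ltn_ord k))).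
refine (eq_bigr _ _) => k _.
rewrite scal3; congr (_ *: _).
rewrite -(bin_fact (ltnSE (ltn_ord k))) !natrM.
by rewrite -mulrA [(k`!)%:R * _]mulrC.
Qed.


Unset Implicit Arguments.

Theorem mainTheorem6 (R : rcfType) (a : nat -> complex R)
    (ha0 : a 0%N = 1) (ha1 : a 1%N != 0) (m l n : nat) :
  pbin a n (fun i : 'I_(m + l) => ('X_i : {mpoly (complex R)[m + l]}))
  = \sum_(k < n.+1)
      'C(n, k)%:R
      * pbin a (n - k) (fun i : 'I_m => ('X_(lshift l i) : {mpoly (complex R)[m + l]}))
      * pbin a k (fun j : 'I_l => ('X_(rshift m j) : {mpoly (complex R)[m + l]})).
Proof.
have H := (@binom_gen _ {mpoly (complex R)[m + l]} a ha0 m l n (fun i : 'I_(m + l) => ('X_i : {mpoly (complex R)[m + l]}))).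
exact H.
Qed.
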